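(* Let $\mathcal{R}_{\mathsf{pdiv}}$ be the PTRS with rules $\mathsf{minus}(x,\mathsf{0})\to\{1:x\}$, $\mathsf{minus}(\mathsf{s}(x),\mathsf{s}(y))\to\{1:\mathsf{minus}(x,y)\}$, $\mathsf{div}(\mathsf{0},\mathsf{s}(y))\to\{1:\mathsf{0}\}$, $\mathsf{div}(\mathsf{s}(x),\mathsf{s}(y))\to\{\tfrac12:\mathsf{div}(\mathsf{s}(x),\mathsf{s}(y)),\ \tfrac12:\mathsf{s}(\mathsf{div}(\mathsf{minus}(x,y),\mathsf{s}(y)))\}$. There is no monotonic, multilinear polynomial interpretation $\mathrm{Pol}$ over $\mathbb{N}$ such that for every rule $\ell\to\{p_1:r_1,\dots,p_k:r_k\}\in\mathcal{R}_{\mathsf{pdiv}}$ both (1) $\mathrm{Pol}(\ell)>\mathrm{Pol}(r_j)$ for some $1\le j\le k$ and (2) $\mathrm{Pol}(\ell)\ge\sum_jp_j\cdot\mathrm{Pol}(r_j)$ hold.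
   Context: A polynomial interpretation assigns to every $n$-ary function symbol $f$ a polynomial $f_{\mathrm{Pol}}\in\mathbb{N}[x_1,\dots,x_n]$, extended homomorphically to terms; an inequation between interpreted terms holds if it is true for all instantiations of the variables by natural numbers. Monotonic: $x>y$ implies $f_{\mathrm{Pol}}(\dots,x,\dots)>f_{\mathrm{Pol}}(\dots,y,\dots)$ for every $f$ and argument position. Multilinear: every monomial of each $f_{\mathrm{Pol}}(x_1,\dots,x_n)$ has the form $c\,x_1^{e_1}\cdots x_n^{e_n}$ with $c\in\mathbb{N}$, $e_i\in\{0,1\}$. *)

(* Defs.v *)
From Stdlib Require List.
From mathcomp Require Import all_boot all_order all_algebra.
Set Implicit Arguments. Unset Strict Implicit. Unset Printing Implicit Defensive.
Import Order.TTheory GRing.Theory Num.Theory.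

Inductive sym := sZero | sS | sMinus | sDiv.

Definition arity (f : sym) : nat :=
  match f with sZero => 0 | sS => 1 | sMinus => 2 | sDiv => 2 end.

Inductive term :=
| tvar of nat
| tzero
| ts of term
| tminus of term & term
| tdiv of term & term.

(* A multilinear polynomial in n variables with natural coefficients:
   sum over subsets S of {0..n-1} of c_S * prod_{i in S} x_i. *)
Definition mlpoly (n : nat) := {ffun {set 'I_n} -> nat}.

Definition eval_mlpoly n (c : mlpoly n) (xs : seq nat) : nat :=
  \sum_(S : {set 'I_n}) c S * \prod_(i in S) nth 0 xs i.

Definition interp := forall f : sym, mlpoly (arity f).

Definition eval_sym (I : interp) (f : sym) (xs : seq nat) : nat :=
  eval_mlpoly (I f) xs.

Fixpoint eval_term (I : interp) (sigma : nat -> nat) (t : term) : nat :=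
  match t with
  | tvar v => sigma v
  | tzero => eval_sym I sZero [::]
  | ts u => eval_sym I sS [:: eval_term I sigma u]
  | tminus u v => eval_sym I sMinus [:: eval_term I sigma u; eval_term I sigma v]
  | tdiv u v => eval_sym I sDiv [:: eval_term I sigma u; eval_term I sigma v]
  end.

Definition monotonic (I : interp) : Prop :=
  forall (f : sym) (xs : seq nat) (i y : nat),
    size xs = arity f -> i < arity f -> nth 0 xs i < y ->
    eval_sym I f xs < eval_sym I f (set_nth 0 xs i y).

Definition prule := (term * seq (rat * term))%type.

Definition x := tvar 0.
Definition y := tvar 1.

Definition R_pdiv : seq prule :=
  [:: (tminus x tzero, [:: (1%R, x)]);
      (tminus (ts x) (ts y), [:: (1%R, tminus x y)]);
      (tdiv tzero (ts y), [:: (1%R, tzero)]);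
      (tdiv (ts x) (ts y),
        [:: ((2%:R)^-1%R, tdiv (ts x) (ts y));
            ((2%:R)^-1%R, ts (tdiv (tminus x y) (ts y)))])].

Definition cond_strict (I : interp) (r : prule) : Prop :=
  exists2 pr, Stdlib.Lists.List.In pr r.2 &
    forall sigma : nat -> nat, eval_term I sigma pr.2 < eval_term I sigma r.1.

Definition cond_expect (I : interp) (r : prule) : Prop :=
  forall sigma : nat -> nat,
    (\sum_(pr <- r.2) pr.1 * (eval_term I sigma pr.2)%:R <=
     (eval_term I sigma r.1)%:R :> rat)%R.

(* Main.v *)
Require Import Defs.
From mathcomp Require Import all_boot all_order all_algebra.
From mathcomp Require Import ring lra zify.
Import Order.TTheory GRing.Theory Num.Theory.

Theorem mainTheorem9 :
  ~ exists I : interp,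
      monotonic I /\
      forall r, Stdlib.Lists.List.In r R_pdiv -> cond_strict I r /\ cond_expect I r.
Proof.
move=> [I [Hm H]].
pose S u := eval_sym I sS [:: u].
pose M u v := eval_sym I sMinus [:: u; v].
pose D u v := eval_sym I sDiv [:: u; v].
have mS : forall u v, (u < v)%N -> (S u < S v)%N.
  move=> u v uv; exact: (Hm sS [:: u] 0 v).
have SG : forall u, (S 0 + u <= S u)%N.
  elim=> [|u IH]; first by rewrite addn0.
  by rewrite addnS; apply: leq_ltn_trans IH (mS _ _ (ltnSn u)).
have MG : forall v, (v <= M 0 v)%N.
  elim=> [|v IH] //; apply: leq_ltn_trans IH _.
  exact: (Hm sMinus [:: 0; v] 1 v.+1).
have mD : forall u u' w, (u < u')%N -> (D u w < D u' w)%N.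
  move=> u u' w uu'; exact: (Hm sDiv [:: u; w] 0 u').
have mDw : forall u u' w, (u <= u')%N -> (D u w <= D u' w)%N.
  move=> u u' w; rewrite leq_eqVlt => /orP [/eqP -> //|/(mD _ _ w) /ltnW //].
have [_ He] := H (tdiv (ts x) (ts y),
        [:: ((2%:R)^-1%R, tdiv (ts x) (ts y));
            ((2%:R)^-1%R, ts (tdiv (tminus x y) (ts y)))]) ltac:(simpl; tauto).
pose a := S 0.
have := He (fun n => if n == 0 then 0 else a.+1).
rewrite !big_cons big_nil /= addr0.
set L := eval_sym _ _ _.
set T := eval_sym I sS _.
move=> Hr.
have : (T%:R <= L%:R :> rat)%R by lra.
rewrite ler_nat.
rewrite /T /L.
fold (S 0) (S a.+1) a.
set w := S a.+1.
fold (M 0 a.+1) (D (M 0 a.+1) w) (D a w) (S (D (M 0 a.+1) w)).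
move=> Hc.
have h1 := SG (D (M 0 a.+1) w).
have h2 := mDw _ _ w (MG a.+1).
have h3 := mD a a.+1 w (ltnSn a).
lia.
Qed.
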